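(* Let $k$ be a positive integer. (1) If $k$ is even, each vertex of $\mathcal F_k$ has at most one predecessor. (2) If $k$ is odd, each vertex of $\mathcal F_k$ has at most two predecessors, and if a vertex $p/q$ has two predecessors $a_1/b_1$ and $a_2/b_2$, then $a_1/b_1$ and $a_2/b_2$ are adjacent in $\mathcal F_k$.
   Context: The vertex set $V$ consists of all reduced fractions $p/q$ with $p,q\in\mathbb Z$, $\gcd(p,q)=1$, together with $1/0$; here $p/q$ and $(-p)/(-q)$ denote the same vertex. For vertices define $d(p/q,a/b)=|pb-qa|$. The graph $\mathcal F_k$ has vertex set $V$, with an edge between $p/q$ and $a/b$ exactly when $d(p/q,a/b)=k$. Write $a/b\prec p/q$ when $a/b$ and $p/q$ are adjacent in $\mathcal F_k$ and $|a|\le|p|$ and $|b|\le|q|$; in that case $a/b$ is called a predecessor of $p/q$. *)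

(* Defs.v *)
From Stdlib Require Import ZArith Lia.
Open Scope Z_scope.

(* A vertex of F_k is a pair (p,q) of integers with gcd(p,q) = 1, standing for
   the reduced fraction p/q (1/0 included). (p,q) and (-p,-q) denote the same
   vertex; this identification is expressed by [same_vertex]. *)
Definition vertex (v : Z * Z) : Prop := Z.gcd (fst v) (snd v) = 1.

Definition same_vertex (u v : Z * Z) : Prop :=
  u = v \/ u = (- fst v, - snd v).

Definition dist (u v : Z * Z) : Z := Z.abs (fst u * snd v - snd u * fst v).

Definition adjacent (k : Z) (u v : Z * Z) : Prop := dist u v = k.

Definition predecessor (k : Z) (u v : Z * Z) : Prop :=
  adjacent k u v /\ Z.abs (fst u) <= Z.abs (fst v) /\ Z.abs (snd u) <= Z.abs (snd v).

(* Main.v *)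
Require Import Defs.
From Stdlib Require Import ZArith Lia Bool.
Open Scope Z_scope.

Definition R6 (p q x y x' y' : Z) : Prop :=
  (x' = x /\ y' = y) \/ (x' = -x /\ y' = -y) \/
  (x' = x + p /\ y' = y + q) \/ (x' = x - p /\ y' = y - q) \/
  (x' = p - x /\ y' = q - y) \/ (x' = -p - x /\ y' = -q - y).

Lemma nz_pq (p q x y k : Z) : 0 < k -> Z.abs (x*q - y*p) = k ->
  Z.abs x <= Z.abs p -> Z.abs y <= Z.abs q -> p <> 0 /\ q <> 0.
Proof.
  intros hk h hx hy; split; intro E; rewrite E in *.
  - assert (x = 0) by lia. rewrite H in h. rewrite Z.mul_0_l, Z.mul_0_r in h. simpl in h. lia.
  - assert (y = 0) by lia. rewrite H in h. rewrite Z.mul_0_l, Z.mul_0_r in h. simpl in h. lia.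
Qed.

Lemma mult_of (p q u w : Z) : Z.gcd p q = 1 -> p <> 0 -> u * q = w * p ->
  exists t, u = t * p /\ w = t * q.
Proof.
  intros g hp e.
  assert (d : (p | u)).
  { apply Z.gauss with q. exists w. rewrite Z.mul_comm, e. ring.
    exact g. }
  destruct d as [t ht]. exists t. split; auto. subst u.
  apply Z.mul_reg_l with p; auto. rewrite (Z.mul_comm p w), <- e. ring.
Qed.

Lemma tbound (t p x x' : Z) : p <> 0 -> Z.abs x <= Z.abs p -> Z.abs x' <= Z.abs p ->
  (x' - x = t * p \/ x' + x = t * p) -> -2 <= t <= 2.
Proof.
  intros hp hx hx' h.
  assert (Z.abs (t*p) <= 2 * Z.abs p) by (destruct h as [h|h]; rewrite <- h; lia).
  rewrite Z.abs_mul in H. assert (0 < Z.abs p) by lia. nia.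
Qed.

Lemma rel (p q x y x' y' k : Z) : 0 < k -> Z.gcd p q = 1 ->
  Z.abs (x*q - y*p) = k -> Z.abs (x'*q - y'*p) = k ->
  Z.abs x <= Z.abs p -> Z.abs y <= Z.abs q ->
  Z.abs x' <= Z.abs p -> Z.abs y' <= Z.abs q -> R6 p q x y x' y'.
Proof.
  intros hk g h h' hx hy hx' hy'.
  destruct (nz_pq p q x y k) as [hp hq]; auto.
  unfold R6.
  assert (C : x'*q - y'*p = x*q - y*p \/ x'*q - y'*p = -(x*q - y*p)) by lia.
  destruct C as [C|C].
  - destruct (mult_of p q (x'-x) (y'-y)) as [t [e1 e2]]; auto. lia.
    assert (-2 <= t <= 2) by (apply (tbound t p x x'); auto).
    assert (t = -2 \/ t = -1 \/ t = 0 \/ t = 1 \/ t = 2) as T by lia.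
    destruct T as [T|[T|[T|[T|T]]]]; subst t.
    + assert (x = p \/ x = -p) by lia. assert (y = q \/ y = -q) by lia.
      assert (x' = x - 2*p) by lia. assert (y' = y - 2*q) by lia. exfalso.
      destruct H0, H1; subst; try lia; ring_simplify in h; simpl in h; lia.
    + right; right; right; left; lia.
    + left; lia.
    + right; right; left; lia.
    + assert (x = p \/ x = -p) by lia. assert (y = q \/ y = -q) by lia.
      exfalso. destruct H0, H1; subst; try lia; ring_simplify in h; simpl in h; lia.
  - destruct (mult_of p q (x'+x) (y'+y)) as [t [e1 e2]]; auto. lia.
    assert (-2 <= t <= 2) by (apply (tbound t p x x'); auto).
    assert (t = -2 \/ t = -1 \/ t = 0 \/ t = 1 \/ t = 2) as T by lia.
    destruct T as [T|[T|[T|[T|T]]]]; subst t.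
    + assert (x = p \/ x = -p) by lia. assert (y = q \/ y = -q) by lia.
      exfalso. destruct H0, H1; subst; try lia; ring_simplify in h; simpl in h; lia.
    + right; right; right; right; right; lia.
    + right; left; lia.
    + right; right; right; right; left; lia.
    + assert (x = p \/ x = -p) by lia. assert (y = q \/ y = -q) by lia.
      exfalso. destruct H0, H1; subst; try lia; ring_simplify in h; simpl in h; lia.
Qed.

Lemma not_both_even (x y : Z) : Z.gcd x y = 1 -> Z.even x = false \/ Z.even y = false.
Proof.
  intros g. destruct (Z.even x) eqn:ex, (Z.even y) eqn:ey; auto. exfalso.
  apply Z.even_spec in ex, ey. destruct ex as [a ha], ey as [b hb].
  assert (d : (2 | Z.gcd x y)) by (apply Z.gcd_greatest; [exists a|exists b]; lia).
  rewrite g in d. destruct d as [c hc]. lia.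
Qed.

Lemma sv_intro (x1 y1 x2 y2 : Z) : (x1 = x2 /\ y1 = y2) \/ (x1 = -x2 /\ y1 = -y2) ->
  same_vertex (x1,y1) (x2,y2).
Proof. unfold same_vertex; simpl; intros [[-> ->]|[-> ->]]; auto. Qed.

Lemma part1 k (hk : 0 < k) : Z.Even k ->
     forall v a1 a2 : Z * Z,
       vertex v -> vertex a1 -> vertex a2 ->
       predecessor k a1 v -> predecessor k a2 v -> same_vertex a1 a2.
Proof.
    intros ke [p q] [x1 y1] [x2 y2]. unfold vertex, predecessor, adjacent, dist; simpl.
    intros gv g1 g2 [h1 [b1 c1]] [h2 [b2 c2]].
    pose proof (rel p q x1 y1 x2 y2 k hk gv h1 h2 b1 c1 b2 c2) as R.
    apply Z.even_spec in ke.
    assert (E : Z.even (x1*q - y1*p) = true).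
    { assert (x1*q - y1*p = k \/ x1*q - y1*p = -k) as [->| ->] by lia; auto.
      rewrite Z.even_opp; auto. }
    rewrite Z.even_sub, !Z.even_mul in E.
    apply not_both_even in gv, g1, g2.
    unfold R6 in R.
    destruct R as [[-> ->]|[[-> ->]|R]]; [apply sv_intro; lia|apply sv_intro; lia|].
    exfalso.
    destruct R as [[-> ->]|[[-> ->]|[[-> ->]|[-> ->]]]];
      rewrite ?Z.even_add, ?Z.even_sub, ?Z.even_opp in g2;
      destruct (Z.even p), (Z.even q), (Z.even x1), (Z.even y1); simpl in *;
      destruct gv, g1, g2; discriminate.
Qed.

Lemma part3 k (hk : 0 < k) : 
     (forall v a1 a2 : Z * Z,
        vertex v -> vertex a1 -> vertex a2 ->
        predecessor k a1 v -> predecessor k a2 v -> ~ same_vertex a1 a2 ->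
        adjacent k a1 a2).
Proof.
    intros [p q] [x1 y1] [x2 y2]. unfold vertex, predecessor, adjacent, dist; simpl.
    intros gv g1 g2 [h1 [b1 c1]] [h2 [b2 c2]] ns.
    pose proof (rel p q x1 y1 x2 y2 k hk gv h1 h2 b1 c1 b2 c2) as R.
    unfold R6 in R.
    destruct R as [[-> ->]|[[-> ->]|R]];
      [exfalso; apply ns, sv_intro; lia|exfalso; apply ns, sv_intro; lia|].
    destruct R as [[-> ->]|[[-> ->]|[[-> ->]|[-> ->]]]]; lia.
Qed.
Lemma part2 k (hk : 0 < k) :
     (forall v a1 a2 a3 : Z * Z,
        vertex v -> vertex a1 -> vertex a2 -> vertex a3 ->
        predecessor k a1 v -> predecessor k a2 v -> predecessor k a3 v ->
        same_vertex a1 a2 \/ same_vertex a1 a3 \/ same_vertex a2 a3).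
Proof.
    intros [p q] [x1 y1] [x2 y2] [x3 y3]. unfold vertex, predecessor, adjacent, dist; simpl.
    intros gv g1 g2 g3 [h1 [b1 c1]] [h2 [b2 c2]] [h3 [b3 c3]].
    pose proof (rel p q x1 y1 x2 y2 k hk gv h1 h2 b1 c1 b2 c2) as R2.
    pose proof (rel p q x1 y1 x3 y3 k hk gv h1 h3 b1 c1 b3 c3) as R3.
    destruct (nz_pq p q x1 y1 k) as [hp hq]; auto.
    assert (nz : ~ (x1 = 0 /\ y1 = 0)) by (intros [-> ->]; discriminate).
    clear h1 h2 h3 g1 g2 g3 gv.
    unfold R6 in R2, R3.
    destruct R2 as [R2|[R2|[R2|[R2|[R2|R2]]]]];
    destruct R3 as [R3|[R3|[R3|[R3|[R3|R3]]]]]; destruct R2 as [-> ->]; destruct R3 as [-> ->];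
    first [ left; apply sv_intro; lia
          | right; left; apply sv_intro; lia
          | right; right; apply sv_intro; lia
          | exfalso; lia ].
Qed.

Theorem lemma4p6 (k : Z) (hk : 0 < k) :
  (Z.Even k ->
     forall v a1 a2 : Z * Z,
       vertex v -> vertex a1 -> vertex a2 ->
       predecessor k a1 v -> predecessor k a2 v -> same_vertex a1 a2) /\
  (Z.Odd k ->
     (forall v a1 a2 a3 : Z * Z,
        vertex v -> vertex a1 -> vertex a2 -> vertex a3 ->
        predecessor k a1 v -> predecessor k a2 v -> predecessor k a3 v ->
        same_vertex a1 a2 \/ same_vertex a1 a3 \/ same_vertex a2 a3) /\
     (forall v a1 a2 : Z * Z,
        vertex v -> vertex a1 -> vertex a2 ->
        predecessor k a1 v -> predecessor k a2 v -> ~ same_vertex a1 a2 ->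
        adjacent k a1 a2)).
Proof.
  split; [exact (part1 k hk)|intros _; split; [exact (part2 k hk)|exact (part3 k hk)]].
Qed.
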